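(* Suppose $m\ge2,n\ge5$ or $m\ge5,n\ge2$, and let $\ast\in\{ss,cc,tot\}$. For every $\ell\in\mathbb{N}$ there exists $M\in\mathrm{rep}\,G_{m,n}$ such that, writing $M\cong M'\oplus X$ with $M'$ interval-decomposable and $X$ having no direct summand isomorphic to an interval representation, one has $$\|\tilde d^\ast_X\|_1:=\sum_{I\in\mathbb{I}_{m,n}}|\tilde d^\ast_X(I)|\ \ge\ \ell.$$
   Context: Fix a field $K$. For integers $m,n\ge1$, $G_{m,n}$ is the equioriented commutative $m\times n$ grid: the quiver with vertex set $\{(i,j):1\le i\le m,\ 1\le j\le n\}$ and arrows $(i,j)\to(i,j+1)$ and $(i,j)\to(i+1,j)$, bound by all commutativity relations; $\mathrm{rep}\,G_{m,n}$ is its category of finite-dimensional representations over $K$ satisfying the relations. An interval of $G_{m,n}$ is a nonempty full subquiver $I$ which is connected (as an undirected graph) and convex (whenever $x,y\in I_0$ and there are paths $x\to z$, $z\to y$ in $G_{m,n}$, then $z\in I_0$); $\mathbb{I}_{m,n}$ is the set of intervals ordered by inclusion of vertex sets. The interval representation $V_I$ has $K$ at vertices of $I$, $0$ elsewhere, identity maps on arrows inside $I$ and zero maps otherwise; interval-decomposable means isomorphic to a direct sum of interval representations. Essential vertices: $I^{ss}_0$ is the set of sources and sinks of the quiver $I$; $I^{cc}_0=I_0\cap(\mathrm{pr}_1(I^{ss}_0)\times\mathrm{pr}_2(I^{ss}_0))$ with $\mathrm{pr}_1,\mathrm{pr}_2$ coordinate projections; $I^{tot}_0=I_0$. Let $KG_{m,n}$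 be the $K$-linear category whose objects are the vertices and whose morphisms are $K$-linear combinations of paths modulo the commutativity relations; representations are $K$-linear functors $KG_{m,n}\to\mathrm{vect}_K$. For $\ast\in\{ss,cc,tot\}$, $\mathcal{C}^\ast_I$ is the full subcategory of $KG_{m,n}$ on $I^\ast_0$, and $M^\ast_I:=M|_{\mathcal{C}^\ast_I}$. The compressed multiplicity $\bar d^\ast_M(I)$ is the multiplicity of the indecomposable $(V_I)^\ast_I$ as a direct summand of $M^\ast_I$. Let $\mu$ be the Möbius function of the finite poset $\mathbb{I}_{m,n}$ ($\mu([I,I])=1$, $\mu([I,J])=-\sum_{I\le L<J}\mu([I,L])$ for $I<J$), and $\tilde d^\ast_M(I):=\sum_{J\ge I}\mu([I,J])\,\bar d^\ast_M(J)$. *)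

(* Defs.v *)
From HB Require Import structures.
From mathcomp Require Import all_boot all_order all_algebra.
From Stdlib Require Import Classical ClassicalEpsilon.
Set Implicit Arguments. Unset Strict Implicit. Unset Printing Implicit Defensive.
Import Order.TTheory GRing.Theory Num.Theory.
Local Open Scope ring_scope.

Section Grid.
Variables (K : fieldType) (m n : nat).

Definition vtx := ('I_m * 'I_n)%type.

Definition arrow (x y : vtx) : bool :=
  ((nat_of_ord x.1 == nat_of_ord y.1) && ((nat_of_ord x.2).+1 == nat_of_ord y.2))
  || ((nat_of_ord x.2 == nat_of_ord y.2) && ((nat_of_ord x.1).+1 == nat_of_ord y.1)).

(* existence of a path x -> y in G_{m,n} (product order) *)
Definition gle (x y : vtx) : bool :=
  ((nat_of_ord x.1 <= nat_of_ord y.1)%N && (nat_of_ord x.2 <= nat_of_ord y.2)%N).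

Definition is_interval (I : {set vtx}) : bool :=
  [&& I != set0,
      [forall x in I, forall y in I,
         connect (fun a b => [&& a \in I, b \in I & arrow a b || arrow b a]) x y]
    & [forall x in I, forall y in I, forall z,
         (gle x z && gle z y) ==> (z \in I)]].

(* A representation of KG_{m,n} = incidence category of the grid poset:
   a K-linear functor is a dimension at each vertex and a matrix for each
   pair u <= v (row-vector convention: x |-> x *m rmap u v). *)
Record rep := Rep {
  rdim : vtx -> nat;
  rmap : forall u v : vtx, 'M[K]_(rdim u, rdim v) }.

Definition is_rep (S : {set vtx}) (M : rep) : Prop :=
  (forall u, u \in S -> rmap M u u = 1%:M) /\
  (forall u v w, u \in S -> v \in S -> w \in S -> gle u v -> gle v w ->
     rmap M u v *m rmap M v w = rmap M u w).

Definition is_mor (S : {set vtx}) (M N : rep)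
  (f : forall u, 'M[K]_(rdim M u, rdim N u)) : Prop :=
  forall u v, u \in S -> v \in S -> gle u v ->
    rmap M u v *m f v = f u *m rmap N u v.

Definition iso (S : {set vtx}) (M N : rep) : Prop :=
  exists f g, @is_mor S M N f /\ @is_mor S N M g /\
    forall u, u \in S -> f u *m g u = 1%:M /\ g u *m f u = 1%:M.

Definition zero_rep : rep := @Rep (fun _ => 0%N) (fun u v => 0).

Definition dsum (M N : rep) : rep :=
  @Rep (fun u => (rdim M u + rdim N u)%N)
       (fun u v => block_mx (rmap M u v) 0 0 (rmap N u v)).

Fixpoint dpow (M : rep) (k : nat) : rep :=
  if k is k'.+1 then dsum M (dpow M k') else zero_rep.

Definition VI (I : {set vtx}) : rep :=
  @Rep (fun u => nat_of_bool (u \in I))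
       (fun u v => const_mx (gle u v)%:R).

Definition interval_decomposable (M : rep) : Prop :=
  exists s : seq {set vtx}, (forall I, I \in s -> is_interval I) /\
    iso setT M (foldr (fun I acc => dsum (VI I) acc) zero_rep s).

Definition no_interval_summand (X : rep) : Prop :=
  forall I, is_interval I -> ~ exists Y, is_rep setT Y /\ iso setT X (dsum (VI I) Y).

Definition sources (I : {set vtx}) : {set vtx} :=
  [set x in I | ~~ [exists y in I, arrow y x]].
Definition sinks (I : {set vtx}) : {set vtx} :=
  [set x in I | ~~ [exists y in I, arrow x y]].
Definition ss_vert (I : {set vtx}) : {set vtx} := sources I :|: sinks I.
Definition cc_vert (I : {set vtx}) : {set vtx} :=
  [set x in I | [exists a in ss_vert I, a.1 == x.1] && [exists b in ss_vert I, b.2 == x.2]].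

Inductive ess_kind := SS | CC | TOT.

Definition ess (k : ess_kind) (I : {set vtx}) : {set vtx} :=
  match k with SS => ss_vert I | CC => cc_vert I | TOT => I end.

Definition summand_pow (S : {set vtx}) (M V : rep) (k : nat) : Prop :=
  exists Y, is_rep S Y /\ iso S M (dsum (dpow V k) Y).
Definition is_mult (S : {set vtx}) (M V : rep) (k : nat) : Prop :=
  summand_pow S M V k /\ forall k', summand_pow S M V k' -> (k' <= k)%N.
Definition mult (S : {set vtx}) (M V : rep) : nat :=
  epsilon (inhabits 0%N) (fun k => is_mult S M V k).

Definition dbar (k : ess_kind) (M : rep) (I : {set vtx}) : nat :=
  mult (ess k I) M (VI I).

Fixpoint mu_aux (fuel : nat) (I J : {set vtx}) : int :=
  if I == J then 1 else
  if fuel is f.+1 then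
    (if I \proper J then
       - \sum_(L : {set vtx} | is_interval L && (I \subset L) && (L \proper J))
           mu_aux f I L
     else 0)
  else 0.
Definition mobius (I J : {set vtx}) : int := mu_aux #|J| I J.

Definition dtilde (k : ess_kind) (M : rep) (I : {set vtx}) : int :=
  \sum_(J : {set vtx} | is_interval J && (I \subset J))
     mobius I J * (dbar k M J)%:Z.

Definition l1norm_dtilde (k : ess_kind) (M : rep) : nat :=
  (\sum_(I : {set vtx} | is_interval I) `|dtilde k M I|%N)%N.

End Grid.

(* Main.v *)
Require Import Defs.
From HB Require Import structures.
From mathcomp Require Import all_boot all_order all_algebra.
From mathcomp Require Import zify.
From Stdlib Require Import Classical ClassicalEpsilon FunctionalExtensionality PropExtensionality.
Set Implicit Arguments. Unset Strict Implicit. Unset Printing Implicit Defensive.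
Import Order.TTheory GRing.Theory Num.Theory.


Section Gen.
Local Open Scope ring_scope.
Variables (K : fieldType) (m n : nat).
Notation rep := (rep K m n).
Notation vtx := (vtx m n).
Implicit Types (S : {set vtx}) (A B C D M N X Y V : rep).

Lemma mor_comp S A B C f g : @is_mor K m n S A B f -> @is_mor K m n S B C g ->
  @is_mor K m n S A C (fun u => f u *m g u).
Proof.
move=> Hf Hg u v Hu Hv Huv.
by rewrite mulmxA Hf // -mulmxA Hg // mulmxA.
Qed.

Lemma mor_id S A : is_rep S A -> @is_mor K m n S A A (fun u => 1%:M).
Proof. by move=> _ u v _ _ _; rewrite mulmx1 mul1mx. Qed.

Lemma iso_refl S A : iso S A A.
Proof.
exists (fun u => 1%:M), (fun u => 1%:M); split; last split.
- by move=> u v _ _ _; rewrite mulmx1 mul1mx.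
- by move=> u v _ _ _; rewrite mulmx1 mul1mx.
- by move=> u _; rewrite mulmx1.
Qed.

Lemma iso_sym S A B : iso S A B -> iso S B A.
Proof.
case=> f [g [Hf [Hg H]]]; exists g, f; split=> //; split=> //.
by move=> u Hu; case: (H u Hu).
Qed.

Lemma iso_trans S A B C : iso S A B -> iso S B C -> iso S A C.
Proof.
case=> f [g [Hf [Hg H]]]; case=> f' [g' [Hf' [Hg' H']]].
exists (fun u => f u *m f' u), (fun u => g' u *m g u); split; last split.
- exact: mor_comp.
- exact: mor_comp.
move=> u Hu; case: (H u Hu) => H1 H2; case: (H' u Hu) => H1' H2'; split.
- by rewrite mulmxA -(mulmxA (f u)) H1' mulmx1 H1.
- by rewrite mulmxA -(mulmxA (g' u)) H2 mulmx1 H2'.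
Qed.

Lemma iso_sub S S' A B : S' \subset S -> iso S A B -> iso S' A B.
Proof.
move=> /subsetP sS [f [g [Hf [Hg H]]]]; exists f, g; split; last split.
- by move=> u v Hu Hv; apply: Hf; apply: sS.
- by move=> u v Hu Hv; apply: Hg; apply: sS.
- by move=> u Hu; apply: H; apply: sS.
Qed.

Lemma is_rep_sub S S' A : S' \subset S -> is_rep S A -> is_rep S' A.
Proof.
move=> /subsetP sS [H1 H2]; split.
- by move=> u Hu; apply: H1; apply: sS.
- by move=> u v w Hu Hv Hw; apply: H2; apply: sS.
Qed.

Lemma is_rep_zero S : is_rep S (zero_rep K m n).
Proof. by split=> *; rewrite flatmx0 [RHS]flatmx0. Qed.

Lemma is_rep_dsum S A B : is_rep S A -> is_rep S B -> is_rep S (dsum A B).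
Proof.
case=> HA1 HA2 [HB1 HB2]; split.
- by move=> u Hu /=; rewrite HA1 // HB1 // -scalar_mx_block.
- move=> u v w Hu Hv Hw Huv Hvw /=.
  by rewrite mulmx_block !mulmx0 !mul0mx !addr0 !add0r HA2 // HB2.
Qed.

Lemma is_rep_dpow S A k : is_rep S A -> is_rep S (dpow A k).
Proof.
by move=> HA; elim: k => [|k IH] /=; [exact: is_rep_zero | exact: is_rep_dsum].
Qed.

Lemma iso_dsum S A A' B B' : iso S A A' -> iso S B B' -> iso S (dsum A B) (dsum A' B').
Proof.
case=> f [g [Hf [Hg H]]]; case=> f' [g' [Hf' [Hg' H']]].
exists (fun u => block_mx (f u) 0 0 (f' u)), (fun u => block_mx (g u) 0 0 (g' u)).
split; last split.
- move=> u v Hu Hv Huv /=.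
  by rewrite !mulmx_block !mulmx0 !mul0mx !addr0 !add0r Hf // Hf'.
- move=> u v Hu Hv Huv /=.
  by rewrite !mulmx_block !mulmx0 !mul0mx !addr0 !add0r Hg // Hg'.
- move=> u Hu; case: (H u Hu) => H1 H2; case: (H' u Hu) => H1' H2'.
  by rewrite !mulmx_block !mulmx0 !mul0mx !addr0 !add0r H1 H2 H1' H2' -!scalar_mx_block.
Qed.

Lemma iso_dpow S A B k : iso S A B -> iso S (dpow A k) (dpow B k).
Proof.
move=> H; elim: k => [|k IH] /=; [exact: iso_refl | exact: iso_dsum].
Qed.


Lemma iso_zero_l S A : iso S A (dsum (zero_rep K m n) A).
Proof.
exists (fun u => (row_mx (0 : 'M_(rdim A u, 0)) 1%:M : 'M_(rdim A u, 0 + rdim A u))).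
exists (fun u => (col_mx (0 : 'M_(0, rdim A u)) 1%:M : 'M_(0 + rdim A u, rdim A u))).
split; last split.
- move=> u v _ _ _ /=; rewrite mul_mx_row mul_row_block.
  by rewrite ?mulmx0 ?mul0mx ?mulmx1 ?mul1mx ?addr0 ?add0r.
- move=> u v _ _ _ /=; rewrite !mul_col_mx !mul_row_col.
  by rewrite ?mulmx0 ?mul0mx ?mulmx1 ?mul1mx ?addr0 ?add0r.
- move=> u _; rewrite mul_row_col mul_col_row ?mulmx0 ?mul0mx mulmx1 add0r; split=> //.
  by rewrite [in RHS]scalar_mx_block [(1%:M : 'M_0)]flatmx0.
Qed.

Lemma iso_swap4 S A B C D :
  iso S (dsum (dsum A B) (dsum C D)) (dsum (dsum A C) (dsum B D)).
Proof.
exists (fun u => block_mx (block_mx 1%:M 0 0 0) (block_mx 0 0 1%:M 0)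
                          (block_mx 0 1%:M 0 0) (block_mx 0 0 0 1%:M)).
exists (fun u => block_mx (block_mx 1%:M 0 0 0) (block_mx 0 0 1%:M 0)
                          (block_mx 0 1%:M 0 0) (block_mx 0 0 0 1%:M)).
split; last split.
- move=> u v _ _ _ /=.
  by rewrite !mulmx_block ?mulmx0 ?mul0mx ?mulmx1 ?mul1mx ?addr0 ?add0r.
- move=> u v _ _ _ /=.
  by rewrite !mulmx_block ?mulmx0 ?mul0mx ?mulmx1 ?mul1mx ?addr0 ?add0r.
- move=> u _; rewrite !mulmx_block ?mulmx0 ?mul0mx ?mulmx1 ?mul1mx ?addr0 ?add0r.
  by rewrite !add_block_mx ?addr0 ?add0r !block_mx0 -!scalar_mx_block.
Qed.

Lemma iso_dpow_split S X V Y k : iso S X (dsum V Y) ->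
  iso S (dpow X k) (dsum (dpow V k) (dpow Y k)).
Proof.
move=> H; elim: k => [|k IH] /=; first exact: iso_zero_l.
apply: iso_trans (iso_swap4 _ _ _ _ _); exact: iso_dsum.
Qed.


Definition retract S V N := exists i p, @is_mor K m n S V N i /\ @is_mor K m n S N V p /\
  forall u, u \in S -> i u *m p u = 1%:M.

Lemma retract_dsumL S V Y : retract S V (dsum V Y).
Proof.
exists (fun u => row_mx (1%:M : 'M_(rdim V u)) (0 : 'M_(rdim V u, rdim Y u))).
exists (fun u => col_mx (1%:M : 'M_(rdim V u)) (0 : 'M_(rdim Y u, rdim V u))).
split; last split.
- move=> u v _ _ _ /=; rewrite mul_mx_row mul_row_block.
  by rewrite ?mulmx0 ?mul0mx ?mulmx1 ?mul1mx ?addr0 ?add0r.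
- move=> u v _ _ _ /=; rewrite !mul_col_mx ?mul_block_col ?mul_row_col.
  by rewrite ?mulmx0 ?mul0mx ?mulmx1 ?mul1mx ?addr0 ?add0r.
- by move=> u _; rewrite mul_row_col mulmx1 mulmx0 addr0.
Qed.

Lemma retract_dsum_left S V A Y : retract S V A -> retract S V (dsum A Y).
Proof.
case=> i [p [Hi [Hp H]]].
exists (fun u => row_mx (i u) (0 : 'M_(rdim V u, rdim Y u))).
exists (fun u => col_mx (p u) (0 : 'M_(rdim Y u, rdim V u))).
split; last split.
- move=> u v Hu Hv Huv /=; rewrite mul_mx_row mul_row_block Hi //.
  by rewrite ?mulmx0 ?mul0mx ?mulmx1 ?mul1mx ?addr0 ?add0r.
- move=> u v Hu Hv Huv /=; rewrite !mul_col_mx ?mul_block_col ?mul_row_col Hp //.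
  by rewrite ?mulmx0 ?mul0mx ?mulmx1 ?mul1mx ?addr0 ?add0r.
- by move=> u Hu; rewrite mul_row_col mulmx0 addr0 H.
Qed.

Lemma retract_iso S V M N : iso S M N -> retract S V N -> retract S V M.
Proof.
case=> f [g [Hf [Hg H]]] [i [p [Hi [Hp H']]]].
exists (fun u => i u *m g u), (fun u => f u *m p u); split; last split.
- exact: mor_comp.
- exact: mor_comp.
- move=> u Hu; case: (H u Hu) => _ H2.
  by rewrite mulmxA -(mulmxA (i u)) H2 mulmx1 H'.
Qed.

Definition Qp S X J := forall i p, @is_mor K m n S (VI K J) X i ->
  @is_mor K m n S X (VI K J) p -> forall u, u \in S -> i u *m p u = 0.

Lemma Qp_zero S J : Qp S (zero_rep K m n) J.
Proof. by move=> i p _ _ u _ /=; rewrite [i u]thinmx0 mul0mx. Qed.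

Lemma Qp_dsum S X Y J : Qp S X J -> Qp S Y J -> Qp S (dsum X Y) J.
Proof.
move=> HX HY i p Hi Hp u Hu.
have Hi1 : @is_mor K m n S (VI K J) X (fun u => lsubmx (i u)).
  move=> a b Ha Hb Hab; have := Hi a b Ha Hb Hab.
  rewrite -[i b]hsubmxK -[i a]hsubmxK mul_mx_row mul_row_block /=.
  rewrite ?mulmx0 ?mul0mx ?addr0 ?add0r ?row_mxKl ?row_mxKr.
  by case/eq_row_mx => H1 H2.
have Hi2 : @is_mor K m n S (VI K J) Y (fun u => rsubmx (i u)).
  move=> a b Ha Hb Hab; have := Hi a b Ha Hb Hab.
  rewrite -[i b]hsubmxK -[i a]hsubmxK mul_mx_row mul_row_block /=.
  rewrite ?mulmx0 ?mul0mx ?addr0 ?add0r ?row_mxKl ?row_mxKr.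
  by case/eq_row_mx => H1 H2.
have Hp1 : @is_mor K m n S X (VI K J) (fun u => usubmx (p u)).
  move=> a b Ha Hb Hab; have := Hp a b Ha Hb Hab.
  rewrite -[p b]vsubmxK -[p a]vsubmxK !mul_col_mx ?mul_block_col ?mul_row_col /=.
  rewrite ?mulmx0 ?mul0mx ?addr0 ?add0r ?col_mxKu ?col_mxKd.
  by case/eq_col_mx => H1 H2.
have Hp2 : @is_mor K m n S Y (VI K J) (fun u => dsubmx (p u)).
  move=> a b Ha Hb Hab; have := Hp a b Ha Hb Hab.
  rewrite -[p b]vsubmxK -[p a]vsubmxK !mul_col_mx ?mul_block_col ?mul_row_col /=.
  rewrite ?mulmx0 ?mul0mx ?addr0 ?add0r ?col_mxKu ?col_mxKd.
  by case/eq_col_mx => H1 H2.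
rewrite -[i u]hsubmxK -[p u]vsubmxK mul_row_col.
by rewrite (HX _ _ Hi1 Hp1 u Hu) (HY _ _ Hi2 Hp2 u Hu) addr0.
Qed.

Lemma Qp_dpow S X J k : Qp S X J -> Qp S (dpow X k) J.
Proof. by move=> H; elim: k => [|k IH] /=; [exact: Qp_zero | exact: Qp_dsum]. Qed.

Lemma Qp_retract S X J u : Qp S X J -> retract S (VI K J) X -> u \in S -> u \in J -> False.
Proof.
move=> HQ [i [p [Hi [Hp H]]]] Hu HuJ.
have E1 := H u Hu; have E0 := HQ i p Hi Hp u Hu.
have lt0 : (0 < rdim (VI K J) u)%N by rewrite /= HuJ.
have := congr1 (fun M : 'M_(rdim (VI K J) u) => M (Ordinal lt0) (Ordinal lt0)) E1.
rewrite E0 !mxE eqxx /= => /esym /eqP; by rewrite oner_eq0.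
Qed.

Lemma sq_dim a b (f : 'M[K]_(a, b)) (g : 'M_(b, a)) :
  f *m g = 1%:M -> g *m f = 1%:M -> a = b.
Proof.
move=> H1 H2; apply/eqP; rewrite eqn_leq.
have := mxrankM_maxl f g; rewrite H1 mxrank1 => /leq_trans -> //; last exact: rank_leq_col.
have := mxrankM_maxl g f; rewrite H2 mxrank1 => /leq_trans -> //; exact: rank_leq_col.
Qed.

Lemma rdim_dpow V k u : rdim (dpow V k) u = (k * rdim V u)%N.
Proof. by elim: k => [|k IH] //=; rewrite IH mulSn. Qed.

Lemma summand_bound S M J k u : summand_pow S M (VI K J) k -> u \in S -> u \in J ->
  (k <= rdim M u)%N.
Proof.
case=> Y [_ [f [g [_ [_ H]]]]] Hu HuJ.
case: (H u Hu) => H1 H2; have := sq_dim H1 H2.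
by rewrite /= rdim_dpow /= HuJ muln1 => ->; rewrite leq_addr.
Qed.

Lemma exmax (P : nat -> Prop) (Bd : nat) : P 0%N -> (forall k, P k -> (k <= Bd)%N) ->
  exists k, P k /\ forall k', P k' -> (k' <= k)%N.
Proof.
move=> P0 HB; apply: NNPP => Hn.
have Hj : forall j, exists k, P k /\ (j <= k)%N.
  elim=> [|j [k [Pk Hjk]]]; first by exists 0%N.
  apply: NNPP => Hc; apply: Hn; exists k; split=> // k' Pk'.
  case: (leqP k' k) => // Hlt; exfalso; apply: Hc; exists k'; split=> //.
  exact: leq_ltn_trans Hjk Hlt.
case: (Hj Bd.+1) => k [Pk Hk]; have := HB k Pk.
by rewrite leqNgt (leq_trans (ltnSn Bd) Hk).
Qed.

Lemma mult_spec S M V (Bd : nat) : is_rep S M -> (forall k, summand_pow S M V k -> (k <= Bd)%N) ->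
  is_mult S M V (mult S M V).
Proof.
move=> HM HB; rewrite /mult.
apply: (epsilon_spec (inhabits 0%N) (fun k => is_mult S M V k)).
apply: exmax HB; exists M; split=> //=; exact: iso_zero_l.
Qed.

End Gen.


Definition dtab (r c : nat) : nat :=
  match r, c with
  | 0, 1 => 1 | 0, 2 => 1 | 1, 0 => 1 | 1, 1 => 2 | 1, 2 => 1 | _, _ => 0 end%N.

Definition cb (r c r' c' i j : nat) : nat :=
  if (r == r') && (c == c') then nat_of_bool (i == j) else
  match r, c, r', c' with
  | 0, 1, 0, 2 => 1
  | 0, 1, 1, 1 => 1
  | 0, 1, 1, 2 => 1
  | 0, 2, 1, 2 => 1
  | 1, 0, 1, 1 => nat_of_bool (j == 0)
  | 1, 0, 1, 2 => 1
  | 1, 1, 1, 2 => nat_of_bool (i == 0)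
  | _, _, _, _ => 0 end%N.

Fixpoint ssum (d : nat) (f : nat -> nat) : nat :=
  if d is d'.+1 then (ssum d' f + f d')%N else 0%N.

Definition chk : bool :=
  all (fun r1 => all (fun c1 => all (fun r2 => all (fun c2 => all (fun r3 => all (fun c3 =>
  all (fun i => all (fun j =>
   (i < dtab r1 c1) ==> (j < dtab r3 c3) ==> (r1 <= r2 <= r3) ==> (c1 <= c2 <= c3) ==>
   (ssum (dtab r2 c2) (fun k => cb r1 c1 r2 c2 i k * cb r2 c2 r3 c3 k j) == cb r1 c1 r3 c3 i j))%N
  (iota 0 2)) (iota 0 2)) (iota 0 3)) (iota 0 2)) (iota 0 3)) (iota 0 2)) (iota 0 3)) (iota 0 2).

Lemma chk_ok : chk. Proof. by vm_compute. Qed.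

Lemma chkP r1 c1 r2 c2 r3 c3 i j : (r1 < 2)%N -> (c1 < 3)%N -> (r2 < 2)%N -> (c2 < 3)%N ->
  (r3 < 2)%N -> (c3 < 3)%N -> (i < dtab r1 c1)%N -> (j < dtab r3 c3)%N ->
  (r1 <= r2 <= r3)%N -> (c1 <= c2 <= c3)%N ->
  ssum (dtab r2 c2) (fun k => cb r1 c1 r2 c2 i k * cb r2 c2 r3 c3 k j)%N = cb r1 c1 r3 c3 i j.
Proof.
move=> h1 h2 h3 h4 h5 h6 hi hj hr hc.
have hi2 : (i < 2)%N by move: hi; case: r1 c1 {h1 h2 hr hc} => [|[|r1]] [|[|[|c1]]] //= /leq_trans; apply.
have hj2 : (j < 2)%N by move: hj; case: r3 c3 {h5 h6 hr hc hi} => [|[|r3]] [|[|[|c3]]] //= /leq_trans; apply.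
have := chk_ok; rewrite /chk.
move=> /allP /(_ r1); rewrite mem_iota h1 => /(_ isT).
move=> /allP /(_ c1); rewrite mem_iota h2 => /(_ isT).
move=> /allP /(_ r2); rewrite mem_iota h3 => /(_ isT).
move=> /allP /(_ c2); rewrite mem_iota h4 => /(_ isT).
move=> /allP /(_ r3); rewrite mem_iota h5 => /(_ isT).
move=> /allP /(_ c3); rewrite mem_iota h6 => /(_ isT).
move=> /allP /(_ i); rewrite mem_iota hi2 => /(_ isT).
move=> /allP /(_ j); rewrite mem_iota hj2 => /(_ isT).
by rewrite hi hj hr hc /= => /eqP.
Qed.

Local Open Scope ring_scope.
Lemma sum_ssum (R : pzSemiRingType) d (G : nat -> nat) :
  (\sum_(k < d) (G k)%:R : R) = (ssum d G)%:R.
Proof.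
elim: d => [|d IH]; first by rewrite big_ord0.
by rewrite big_ord_recr /= IH natrD.
Qed.

Section Win.
Variables (K : fieldType) (m n : nat) (s : bool).
Notation rep := (rep K m n).
Notation vtx := (vtx m n).

Definition PP := if s then n else m.
Definition QQ := if s then m else n.
Hypothesis HP : (2 <= PP)%N.
Hypothesis HQ : (3 <= QQ)%N.

Definition pc (u : vtx) : nat := if s then nat_of_ord u.2 else nat_of_ord u.1.
Definition qc (u : vtx) : nat := if s then nat_of_ord u.1 else nat_of_ord u.2.
Definition win (u : vtx) : bool := (PP - 2 <= pc u)%N && (QQ - 3 <= qc u)%N.
Definition wr (u : vtx) : nat := (pc u - (PP - 2))%N.
Definition wc (u : vtx) : nat := (qc u - (QQ - 3))%N.

Lemma pc_lt u : (pc u < PP)%N.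
Proof. by rewrite /pc /PP; case: s. Qed.
Lemma qc_lt u : (qc u < QQ)%N.
Proof. by rewrite /qc /QQ; case: s. Qed.

Lemma gleE u v : gle u v = (pc u <= pc v)%N && (qc u <= qc v)%N.
Proof. by rewrite /gle /pc /qc; case: s => //; rewrite andbC. Qed.

Lemma arrowE u v : arrow u v =
  ((pc u == pc v) && ((qc u).+1 == qc v)) || ((qc u == qc v) && ((pc u).+1 == pc v)).
Proof. by rewrite /arrow /pc /qc; case: s => //; rewrite orbC. Qed.

Lemma wr_lt u : win u -> (wr u < 2)%N.
Proof. move: (pc_lt u) => h /andP [h1 h2]; rewrite /wr; lia. Qed.
Lemma wc_lt u : win u -> (wc u < 3)%N.
Proof. move: (qc_lt u) => h /andP [h1 h2]; rewrite /wc; lia. Qed.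

Lemma pcE u : win u -> pc u = (PP - 2 + wr u)%N.
Proof. case/andP => h1 h2; rewrite /wr; lia. Qed.
Lemma qcE u : win u -> qc u = (QQ - 3 + wc u)%N.
Proof. case/andP => h1 h2; rewrite /wc; lia. Qed.

Lemma win_up u v : win u -> gle u v -> win v.
Proof. rewrite gleE /win => /andP [h1 h2] /andP [h3 h4]; apply/andP; split; lia. Qed.

Lemma wle u v : win u -> gle u v -> (wr u <= wr v)%N && (wc u <= wc v)%N.
Proof.
move=> hu huv; have hv := win_up hu huv; move: huv.
rewrite gleE (pcE hu) (pcE hv) (qcE hu) (qcE hv) => /andP [h1 h2]; apply/andP; split; lia.
Qed.

Lemma gle_win u v : win u -> win v -> gle u v = (wr u <= wr v)%N && (wc u <= wc v)%N.
Proof.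
move=> hu hv; rewrite gleE (pcE hu) (pcE hv) (qcE hu) (qcE hv).
by rewrite !leq_add2l.
Qed.

Lemma arrow_win u v : win u -> win v -> arrow u v =
  ((wr u == wr v) && ((wc u).+1 == wc v)) || ((wc u == wc v) && ((wr u).+1 == wr v)).
Proof.
move=> hu hv; rewrite arrowE (pcE hu) (pcE hv) (qcE hu) (qcE hv).
by rewrite !eqn_add2l -!addnS !eqn_add2l.
Qed.

Lemma win_inj u v : win u -> win v -> wr u = wr v -> wc u = wc v -> u = v.
Proof.
move=> hu hv hr hc.
have hp : pc u = pc v by rewrite (pcE hu) (pcE hv) hr.
have hq : qc u = qc v by rewrite (qcE hu) (qcE hv) hc.
case: u v hp hq {hu hv hr hc} => [a b] [c d]; rewrite /pc /qc /=.
by case: s => /= h1 h2; congr pair; apply: val_inj.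
Qed.

Lemma exv r c : (r < 2)%N -> (c < 3)%N -> exists u, [/\ win u, wr u = r & wc u = c].
Proof.
move=> hr hc.
have hp : (PP - 2 + r < PP)%N by lia.
have hq : (QQ - 3 + c < QQ)%N by lia.
move: hp hq; rewrite /win /wr /wc /pc /qc /PP /QQ; case: s => hp hq.
- exists (Ordinal hq, Ordinal hp) => /=; split; [apply/andP; split|..]; lia.
- exists (Ordinal hp, Ordinal hq) => /=; split; [apply/andP; split|..]; lia.
Qed.


Local Open Scope ring_scope.

Definition dimX (u : vtx) : nat := if win u then dtab (wr u) (wc u) else 0%N.
Definition X0 : rep := @Rep K m n dimX
  (fun u v => \matrix_(i < dimX u, j < dimX v) (cb (wr u) (wc u) (wr v) (wc v) i j)%:R).

Definition dimY (u : vtx) : nat := nat_of_bool [&& win u, wr u == 1%N & wc u == 1%N].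
Definition Y0 : rep := @Rep K m n dimY
  (fun u v => \matrix_(i < dimY u, j < dimY v) ((i : nat) == j)%:R).

Lemma mx0dim d (A : 'M[K]_d) : d = 0%N -> A = 0.
Proof. by move=> h; subst d; apply: flatmx0. Qed.

Lemma mx0dim2 d e (A : 'M[K]_(d, e)) : d = 0%N -> A = 0.
Proof. by move=> h; subst d; apply: flatmx0. Qed.
Lemma mx0dim3 d e (A : 'M[K]_(d, e)) : e = 0%N -> A = 0.
Proof. by move=> h; subst e; apply: thinmx0. Qed.

Lemma sum_delta d (i j : nat) : (i < d)%N ->
  \sum_(k < d) (((i == k :> nat)%:R : K) * ((k : nat) == j)%:R) = (i == j)%:R.
Proof.
move=> hi; rewrite (bigD1 (Ordinal hi)) //= eqxx mul1r big1 ?addr0 //.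
move=> k hk; suff -> : (i == k :> nat) = false by rewrite mul0r.
by apply/negbTE; apply: contra hk => /eqP hk; apply/eqP; apply: val_inj.
Qed.

Lemma ord0_false d (i : 'I_d) : d = 0%N -> False.
Proof. by move=> h; subst d; case: i. Qed.

Lemma is_rep_X0 S : is_rep S X0.
Proof.
split.
- move=> u _; apply/matrixP => i j; rewrite !mxE /cb !eqxx /=.
  by case: i j => [i hi] [j hj].
- move=> u v w _ _ _ huv hvw; apply/matrixP => i j; rewrite !mxE.
  case hu: (win u); last first.
    by exfalso; apply: (ord0_false i); rewrite /= /dimX hu.
  have hv := win_up hu huv; have hw := win_up hv hvw.
  rewrite (eq_bigr (fun k : 'I_ _ => ((fun k => cb (wr u) (wc u) (wr v) (wc v) i k *
     cb (wr v) (wc v) (wr w) (wc w) k j) k)%N%:R)); last by move=> k _; rewrite natrM !mxE.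
  rewrite (sum_ssum _ _ (fun k => cb (wr u) (wc u) (wr v) (wc v) i k * cb (wr v) (wc v) (wr w) (wc w) k j)%N) /= {1}/dimX hv; congr (_%:R).
  have hdu : dimX u = dtab (wr u) (wc u) by rewrite /dimX hu.
  have hdw : dimX w = dtab (wr w) (wc w) by rewrite /dimX hw.
  have hi : (i < dtab (wr u) (wc u))%N by rewrite -hdu.
  have hj : (j < dtab (wr w) (wc w))%N by rewrite -hdw.
  move: (wle hu huv) (wle hv hvw) => /andP [a1 a2] /andP [a3 a4].
  by apply: chkP; rewrite ?wr_lt ?wc_lt ?a1 ?a2 ?a3 ?a4.
Qed.

Lemma is_rep_Y0 S : is_rep S Y0.
Proof.
split.
- by move=> u _; apply/matrixP => i j; rewrite !mxE.
- move=> u v w _ _ _ huv hvw; apply/matrixP => i j; rewrite !mxE.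
  rewrite (eq_bigr (fun k : 'I_ _ => (((i : nat) == k)%:R * ((k : nat) == j)%:R)));
    last by move=> k _; rewrite !mxE.
  apply: sum_delta.
  case hu: [&& win u, wr u == 1%N & wc u == 1%N]; last first.
    by exfalso; apply: (ord0_false i); rewrite /= /dimY hu.
  case hw: [&& win w, wr w == 1%N & wc w == 1%N]; last first.
    by exfalso; apply: (ord0_false j); rewrite /= /dimY hw.
  have hdu : dimY u = 1%N by rewrite /dimY hu.
  have hi : (i < 1)%N by rewrite -hdu.
  case/and3P: hu => hu /eqP hru /eqP hcu; case/and3P: hw => hw /eqP hrw /eqP hcw.
  have hv := win_up hu huv.
  have := wle hu huv; have := wle hv hvw; rewrite hru hcu hrw hcw.
  case/andP=> h1 h2 /andP [h3 h4].
  have e1 : wr v = 1%N by lia.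
  have e2 : wc v = 1%N by lia.
  by rewrite /= /dimY hv e1 e2.
Qed.

End Win.

Local Close Scope ring_scope.
Local Open Scope ring_scope.
Section B.
Variable K : fieldType.

Lemma brick_core (dc dw da db dt : nat) (ec : 'M[K]_dc) (ew : 'M_dw) (ea : 'M_da)
  (eb : 'M_db) (et : 'M_dt) :
  dc = 1%N -> dw = 2%N -> da = 1%N -> db = 1%N -> dt = 1%N ->
  (\matrix_(i<dc,j<dw) (cb 1 0 1 1 i j)%:R) *m ew = ec *m \matrix_(i<dc,j<dw) (cb 1 0 1 1 i j)%:R ->
  (\matrix_(i<da,j<dw) (cb 0 1 1 1 i j)%:R) *m ew = ea *m \matrix_(i<da,j<dw) (cb 0 1 1 1 i j)%:R ->
  (\matrix_(i<dw,j<dt) (cb 1 1 1 2 i j)%:R) *m et = ew *m \matrix_(i<dw,j<dt) (cb 1 1 1 2 i j)%:R ->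
  (\matrix_(i<da,j<db) (cb 0 1 0 2 i j)%:R) *m eb = ea *m \matrix_(i<da,j<db) (cb 0 1 0 2 i j)%:R ->
  (\matrix_(i<db,j<dt) (cb 0 2 1 2 i j)%:R) *m et = eb *m \matrix_(i<db,j<dt) (cb 0 2 1 2 i j)%:R ->
  exists x, [/\ ec = x%:M, ew = x%:M, ea = x%:M, eb = x%:M & et = x%:M].
Proof.
move=> ? ? ? ? ?; subst => Ecw Eaw Ewt Eab Ebt.
pose i0 : 'I_2 := ord0; pose i1 : 'I_2 := ord_max.
have cw0 := congr1 (fun M : 'M_(1,2) => M ord0 i0) Ecw.
have cw1 := congr1 (fun M : 'M_(1,2) => M ord0 i1) Ecw.
have aw0 := congr1 (fun M : 'M_(1,2) => M ord0 i0) Eaw.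
have aw1 := congr1 (fun M : 'M_(1,2) => M ord0 i1) Eaw.
have wt0 := congr1 (fun M : 'M_(2,1) => M i0 ord0) Ewt.
have wt1 := congr1 (fun M : 'M_(2,1) => M i1 ord0) Ewt.
have ab := congr1 (fun M : 'M_(1,1) => M ord0 ord0) Eab.
have bt := congr1 (fun M : 'M_(1,1) => M ord0 ord0) Ebt.
move: cw0 cw1 aw0 aw1 wt0 wt1 ab bt.
rewrite !mxE !big_ord_recl !big_ord0 !mxE /=.
have -> : lift ord0 (ord0 : 'I_1) = i1 by apply: val_inj.
rewrite /bump /cb /= ?mul1r ?mulr1 ?mul0r ?mulr0 ?addr0 ?add0r.
move=> cw0 cw1 aw0 aw1 wt0 wt1 ab bt.
exists (et ord0 ord0).
have e11 : ew i1 i1 = et ord0 ord0.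
  by move: aw1; rewrite cw1 add0r => ->; rewrite -aw0 -wt1 addr0 wt0.
split.
- by rewrite [ec]mx11_scalar -cw0 wt0.
- apply/matrixP => i j; rewrite !mxE.
  case: i => [[|[|i]] hi] //; case: j => [[|[|j]] hj] //=; rewrite ?mulr1n ?mulr0n.
  + by rewrite wt0; congr (ew _ _); apply: val_inj.
  + by rewrite -cw1; congr (ew _ _); apply: val_inj.
  + by rewrite wt1; congr (ew _ _); apply: val_inj.
  + by rewrite -e11; congr (ew _ _); apply: val_inj.
- by rewrite [ea]mx11_scalar -aw0 -wt1 addr0 wt0.
- by rewrite [eb]mx11_scalar ab -aw0 -wt1 addr0 wt0.
- exact: mx11_scalar.
Qed.

Lemma nil1 d (A : 'M[K]_d) : (d <= 1)%N -> A *m A = 0 -> A = 0.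
Proof.
case: d A => [|[|d]] A // _; first by move=> _; apply: flatmx0.
rewrite [A]mx11_scalar -scalar_mxM => /matrixP /(_ ord0 ord0).
rewrite !mxE /= mulr1n => /eqP; rewrite mulf_eq0 orbb => /eqP ->.
by apply/matrixP => a b; rewrite !mxE mul0rn.
Qed.

Lemma scal0 d : (0%:M : 'M[K]_d) = 0.
Proof. by apply/matrixP => a b; rewrite !mxE mul0rn. Qed.

End B.

Section QX.
Variables (K : fieldType) (m n : nat) (s : bool).
Hypothesis HP : (2 <= PP m n s)%N.
Hypothesis HQ : (3 <= QQ m n s)%N.
Notation vtx := (vtx m n).
Notation win := (win s).
Notation wr := (wr s).
Notation wc := (wc s).
Notation X0 := (X0 K m n s).

Lemma Qp_X0 (S : {set vtx}) J :
  (forall u, win u -> dtab (wr u) (wc u) != 0%N -> u \in S) -> Qp S X0 J.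
Proof.
move=> HS i p Hi Hp u Hu.
pose e := fun u => p u *m i u.
have He : @is_mor K m n S X0 X0 e := mor_comp Hp Hi.
have [vc [wvc rvc cvc]] := exv HP HQ (isT : (1 < 2)%N) (isT : (0 < 3)%N).
have [vw [wvw rvw cvw]] := exv HP HQ (isT : (1 < 2)%N) (isT : (1 < 3)%N).
have [va [wva rva cva]] := exv HP HQ (isT : (0 < 2)%N) (isT : (1 < 3)%N).
have [vb [wvb rvb cvb]] := exv HP HQ (isT : (0 < 2)%N) (isT : (2 < 3)%N).
have [vt [wvt rvt cvt]] := exv HP HQ (isT : (1 < 2)%N) (isT : (2 < 3)%N).
have Sc : vc \in S by apply: HS; rewrite ?rvc ?cvc.
have Sw : vw \in S by apply: HS; rewrite ?rvw ?cvw.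
have Sa : va \in S by apply: HS; rewrite ?rva ?cva.
have Sb : vb \in S by apply: HS; rewrite ?rvb ?cvb.
have St : vt \in S by apply: HS; rewrite ?rvt ?cvt.
have G : forall x y : vtx, win x -> win y -> (wr x <= wr y)%N -> (wc x <= wc y)%N -> gle x y.
  by move=> x y hx hy h1 h2; rewrite (gle_win HP HQ hx hy) h1 h2.
have Ecw := He vc vw Sc Sw (G _ _ wvc wvw ltac:(by rewrite rvc rvw) ltac:(by rewrite cvc cvw)).
have Eaw := He va vw Sa Sw (G _ _ wva wvw ltac:(by rewrite rva rvw) ltac:(by rewrite cva cvw)).
have Ewt := He vw vt Sw St (G _ _ wvw wvt ltac:(by rewrite rvw rvt) ltac:(by rewrite cvw cvt)).
have Eab := He va vb Sa Sb (G _ _ wva wvb ltac:(by rewrite rva rvb) ltac:(by rewrite cva cvb)).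
have Ebt := He vb vt Sb St (G _ _ wvb wvt ltac:(by rewrite rvb rvt) ltac:(by rewrite cvb cvt)).
move: Ecw Eaw Ewt Eab Ebt; rewrite /= rvc cvc rvw cvw rva cva rvb cvb rvt cvt.
move=> Ecw Eaw Ewt Eab Ebt.
have dE : forall (x : vtx) r c, win x -> wr x = r -> wc x = c -> dimX s x = dtab r c.
  by move=> x r c hx hr hc; rewrite /dimX hx hr hc.
have [x [ec ew ea eb et]] := brick_core (dE _ _ _ wvc rvc cvc) (dE _ _ _ wvw rvw cvw)
  (dE _ _ _ wva rva cva) (dE _ _ _ wvb rvb cvb) (dE _ _ _ wvt rvt cvt) Ecw Eaw Ewt Eab Ebt.
have x0 : x = 0.
  apply/eqP; apply: contraT => hx.
  have h2 : (dimX s vw <= \rank (e vw))%N.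
    rewrite ew; apply: (@mulmx1_min_rank _ _ _ _ _ (x^-1%:M) 1%:M).
    by rewrite mulmx1 -scalar_mxM mulVf.
  have h1 : (\rank (e vw) <= 1)%N.
    apply: leq_trans (mxrankM_maxl _ _) _; apply: leq_trans (rank_leq_col _) _.
    by rewrite /=; case: (vw \in J).
  by move: (leq_trans h2 h1); rewrite (dE _ _ _ wvw rvw cvw).
have e0 : e u = 0.
  case hwu: (win u); last by apply: mx0dim; rewrite /= /dimX hwu.
  case hd: (dtab (wr u) (wc u) == 0%N).
    by apply: mx0dim; rewrite /= /dimX hwu; apply/eqP.
  have hr := wr_lt HP HQ hwu; have hc := wc_lt HP HQ hwu.
  have P5 : u = vc \/ u = vw \/ u = va \/ u = vb \/ u = vt.
    move: hd hr hc; case Er: (wr u) => [|[|r]] //; case Ec: (wc u) => [|[|[|c]]] // _ _ _.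
    + by right; right; left; apply: (win_inj HP HQ); rewrite ?Er ?Ec ?rva ?cva.
    + by right; right; right; left; apply: (win_inj HP HQ); rewrite ?Er ?Ec ?rvb ?cvb.
    + by left; apply: (win_inj HP HQ); rewrite ?Er ?Ec ?rvc ?cvc.
    + by right; left; apply: (win_inj HP HQ); rewrite ?Er ?Ec ?rvw ?cvw.
    + by right; right; right; right; apply: (win_inj HP HQ); rewrite ?Er ?Ec ?rvt ?cvt.
  by case: P5 => [->|[->|[->|[->|->]]]]; rewrite ?ec ?ew ?ea ?eb ?et x0 scal0.
apply: nil1; first by rewrite /=; case: (u \in J).
by rewrite mulmxA -(mulmxA (i u)) -/(e u) e0 mulmx0 mul0mx.
Qed.

End QX.

Local Close Scope ring_scope.
Local Open Scope ring_scope.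

Section G2.
Variables (K : fieldType) (m n : nat).
Notation vtx := (vtx m n).
Notation rep := (rep K m n).

Lemma gle_trans (x y z : vtx) : gle x y -> gle y z -> gle x z.
Proof.
rewrite /gle => /andP [h1 h2] /andP [h3 h4]; apply/andP; split.
- exact: leq_trans h3.
- exact: leq_trans h4.
Qed.

Lemma arrow_gle (x y : vtx) : arrow x y -> gle x y /\ (x.1 + x.2).+1 = (y.1 + y.2)%N.
Proof.
rewrite /arrow /gle => /orP [] /andP [/eqP h1 /eqP h2]; rewrite -h1 -h2;
  split; rewrite ?leqnn ?leqnSn //; lia.
Qed.

Lemma min_source (J : {set vtx}) x : x \in J -> exists2 z, z \in sources J & gle z x.
Proof.
move=> hx.
have hP : (x \in J) && gle x x by rewrite hx /gle !leqnn.
case: (@arg_minnP _ x (fun z => (z \in J) && gle z x) (fun z : vtx => (z.1 + z.2)%N) hP) => z /andP [hzJ hzx] hmin.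
exists z => //; rewrite inE hzJ /=; apply/existsP => -[y /andP [hyJ hyz]].
have [hg hs] := arrow_gle hyz.
have := hmin y; rewrite hyJ (gle_trans hg hzx) => /(_ isT); rewrite -hs; lia.
Qed.

Lemma src_ess k (J : {set vtx}) z : z \in sources J -> z \in ess k J.
Proof.
move=> hz; have hzJ : z \in J by move: hz; rewrite inE => /andP [].
case: k => /=.
- by rewrite /ss_vert inE hz.
- rewrite /cc_vert inE hzJ /=; apply/andP; split; apply/existsP; exists z;
    by rewrite /ss_vert inE hz eqxx.
- exact: hzJ.
Qed.

Lemma snk_ess k (J : {set vtx}) z : z \in sinks J -> z \in ess k J.
Proof.
move=> hz; have hzJ : z \in J by move: hz; rewrite inE => /andP [].
case: k => /=.
- by rewrite /ss_vert inE hz orbT.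
- rewrite /cc_vert inE hzJ /=; apply/andP; split; apply/existsP; exists z;
    by rewrite /ss_vert inE hz orbT eqxx.
- exact: hzJ.
Qed.

Lemma ess_sub k (J : {set vtx}) : ess k J \subset J.
Proof.
apply/subsetP => z; case: k => /=.
- by rewrite /ss_vert !inE => /orP [] /andP [].
- by rewrite /cc_vert inE => /andP [].
- by [].
Qed.

Lemma sum_delta_r d (F : 'I_d -> K) j (hj : (j < d)%N) :
  \sum_(k < d) F k * ((k : nat) == j)%:R = F (Ordinal hj).
Proof.
rewrite (bigD1 (Ordinal hj)) //= eqxx mulr1 big1 ?addr0 //.
move=> k hk; suff -> : ((k : nat) == j) = false by rewrite mulr0.
by apply/negbTE; apply: contra hk => /eqP hk; apply/eqP; apply: val_inj.
Qed.

Lemma sum_delta_l d (F : 'I_d -> K) i (hi : (i < d)%N) :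
  \sum_(k < d) ((i == k :> nat)%:R * F k) = F (Ordinal hi).
Proof.
rewrite (bigD1 (Ordinal hi)) //= eqxx mul1r big1 ?addr0 //.
move=> k hk; suff -> : (i == k :> nat) = false by rewrite mul0r.
by apply/negbTE; apply: contra hk => /eqP hk; apply/eqP; apply: val_inj.
Qed.

Lemma ordeq d (i j : 'I_d) : (((i : nat) == j)%:R : K) = (i == j)%:R.
Proof. by case: i j => [i hi] [j hj]. Qed.

Lemma iso_of_table (S : {set vtx}) (X N : rep) :
  (forall u, u \in S -> rdim X u = rdim N u) ->
  (forall u v, u \in S -> v \in S -> gle u v ->
     forall (i : 'I_(rdim X u)) (j : 'I_(rdim X v)) (i' : 'I_(rdim N u)) (j' : 'I_(rdim N v)),
     i = i' :> nat -> j = j' :> nat -> rmap X u v i j = rmap N u v i' j') ->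
  iso S X N.
Proof.
move=> Hd He.
exists (fun u => \matrix_(i < rdim X u, j < rdim N u) (((i : nat) == j)%:R : K)).
exists (fun u => \matrix_(i < rdim N u, j < rdim X u) (((i : nat) == j)%:R : K)).
split; last split.
- move=> u v hu hv huv; apply/matrixP => i j; rewrite !mxE.
  rewrite (eq_bigr (fun k => rmap X u v i k * ((k : nat) == j)%:R)); last by move=> k _; rewrite mxE.
  rewrite (eq_bigr (fun k : 'I_(rdim N u) => ((i : nat) == k)%:R * rmap N u v k j)); last by move=> k _; rewrite mxE.
  have hj : (j < rdim X v)%N by rewrite Hd.
  have hi : (i < rdim N u)%N by rewrite -Hd.
  by rewrite sum_delta_r sum_delta_l; apply: He.
- move=> u v hu hv huv; apply/matrixP => i j; rewrite !mxE.
  rewrite (eq_bigr (fun k => rmap N u v i k * ((k : nat) == j)%:R)); last by move=> k _; rewrite mxE.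
  rewrite (eq_bigr (fun k : 'I_(rdim X u) => ((i : nat) == k)%:R * rmap X u v k j)); last by move=> k _; rewrite mxE.
  have hj : (j < rdim N v)%N by rewrite -Hd.
  have hi : (i < rdim X u)%N by rewrite Hd.
  by rewrite sum_delta_r sum_delta_l; symmetry; apply: He.
- move=> u hu; split; apply/matrixP => i j; rewrite !mxE.
  + rewrite (eq_bigr (fun k : 'I_(rdim N u) => ((i : nat) == k)%:R * ((k : nat) == j)%:R)); last by move=> k _; rewrite !mxE.
    by rewrite sum_delta ?ordeq // -Hd.
  + rewrite (eq_bigr (fun k : 'I_(rdim X u) => ((i : nat) == k)%:R * ((k : nat) == j)%:R)); last by move=> k _; rewrite !mxE.
    by rewrite sum_delta ?ordeq // Hd.
Qed.

End G2.

Local Close Scope ring_scope.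

Definition cbN (i j : nat) : nat :=
  if (i == 0) && (j == 0) then 1 else if (i != 0) && (j != 0) then nat_of_bool (i == j) else 0.

Definition chk2 : bool :=
  all (fun r1 => all (fun c1 => all (fun r2 => all (fun c2 => all (fun i => all (fun j =>
   (dtab r1 c1 != 0) ==> (dtab r2 c2 != 0) ==> (r1 <= r2) ==> (c1 <= c2) ==>
   ~~ [&& r1 == 0, c1 == 1, r2 == 1 & c2 == 1] ==> (i < dtab r1 c1) ==> (j < dtab r2 c2) ==>
   (cb r1 c1 r2 c2 i j == cbN i j))
  (iota 0 2)) (iota 0 2)) (iota 0 3)) (iota 0 2)) (iota 0 3)) (iota 0 2).

Lemma chk2_ok : chk2. Proof. by vm_compute. Qed.

Lemma dtab_lt2 r c : (r < 2)%N -> (c < 3)%N -> (dtab r c <= 2)%N.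
Proof. by case: r => [|[|r]] //; case: c => [|[|[|c]]]. Qed.

Lemma chk2P r1 c1 r2 c2 i j : (r1 < 2)%N -> (c1 < 3)%N -> (r2 < 2)%N -> (c2 < 3)%N ->
  dtab r1 c1 != 0%N -> dtab r2 c2 != 0%N -> (r1 <= r2)%N -> (c1 <= c2)%N ->
  ~~ [&& r1 == 0, c1 == 1, r2 == 1 & c2 == 1]%N -> (i < dtab r1 c1)%N -> (j < dtab r2 c2)%N ->
  cb r1 c1 r2 c2 i j = cbN i j.
Proof.
move=> h1 h2 h3 h4 d1 d2 hr hc hn hi hj.
have hi2 : (i < 2)%N := leq_trans hi (dtab_lt2 h1 h2).
have hj2 : (j < 2)%N := leq_trans hj (dtab_lt2 h3 h4).
have := chk2_ok; rewrite /chk2.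
move=> /allP /(_ r1); rewrite mem_iota h1 => /(_ isT).
move=> /allP /(_ c1); rewrite mem_iota h2 => /(_ isT).
move=> /allP /(_ r2); rewrite mem_iota h3 => /(_ isT).
move=> /allP /(_ c2); rewrite mem_iota h4 => /(_ isT).
move=> /allP /(_ i); rewrite mem_iota hi2 => /(_ isT).
move=> /allP /(_ j); rewrite mem_iota hj2 => /(_ isT).
by rewrite d1 d2 hr hc hn hi hj /= => /eqP.
Qed.

Section W.
Local Open Scope ring_scope.
Variables (K : fieldType) (m n : nat) (s : bool).
Hypothesis HP : (2 <= PP m n s)%N.
Hypothesis HQ : (3 <= QQ m n s)%N.
Notation vtx := (vtx m n).
Notation win := (win s).
Notation wr := (wr s).
Notation wc := (wc s).
Notation X0 := (X0 K m n s).
Notation Y0 := (Y0 K m n s).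

Definition U : {set vtx} := [set u | win u && (dtab (wr u) (wc u) != 0%N)].
Definition I0 : {set vtx} := [set u | (u \in U) && ~~ ((wr u == 0%N) && (wc u == 1%N))].

Lemma Nentry (I : {set vtx}) u v : u \in I -> v \in I -> gle u v ->
  forall (i : 'I_(rdim (dsum (VI K I) Y0) u)) (j : 'I_(rdim (dsum (VI K I) Y0) v)),
  rmap (dsum (VI K I) Y0) u v i j = (cbN i j)%:R.
Proof.
move=> huI hvI huv i j.
have du : rdim (VI K I) u = 1%N by rewrite /= huI.
have dv : rdim (VI K I) v = 1%N by rewrite /= hvI.
rewrite /=.
case: (splitP i) => [i' Ei | k Ei]; case: (splitP j) => [j' Ej | l Ej].
- have -> : i = lshift _ i' by apply: val_inj.
  have -> : j = lshift _ j' by apply: val_inj.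
  rewrite block_mxEul mxE huv.
  have hi' : (i' < 1)%N by rewrite -du.
  have hj' : (j' < 1)%N by rewrite -dv.
  by rewrite /cbN /=; move: hi' hj'; case: (nat_of_ord i') => //; case: (nat_of_ord j').
- have -> : i = lshift _ i' by apply: val_inj.
  have -> : j = rshift _ l by apply: val_inj.
  rewrite block_mxEur mxE.
  have hi' : (i' < 1)%N by rewrite -du.
  by rewrite /cbN /= hvI; move: hi'; case: (nat_of_ord i').
- have -> : i = rshift _ k by apply: val_inj.
  have -> : j = lshift _ j' by apply: val_inj.
  rewrite block_mxEdl mxE.
  have hj' : (j' < 1)%N by rewrite -dv.
  by rewrite /cbN /= huI; move: hj'; case: (nat_of_ord j') => // _; rewrite andbF.
- have -> : i = rshift _ k by apply: val_inj.
  have -> : j = rshift _ l by apply: val_inj.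
  rewrite block_mxEdr mxE.
  by rewrite /cbN /= huI hvI /= eqSS.
Qed.


Lemma memU u : u \in U -> win u /\ dtab (wr u) (wc u) != 0%N.
Proof. by rewrite inE => /andP []. Qed.

Lemma dimXU u : u \in U -> dimX s u = dtab (wr u) (wc u).
Proof. by case/memU => h _; rewrite /dimX h. Qed.

Lemma iso_X0N (S I : {set vtx}) : S \subset I -> I \subset U ->
  ((forall u, u \in S -> ~~ ((wr u == 0%N) && (wc u == 1%N))) \/
   (forall u, u \in S -> ~~ ((wr u == 1%N) && (wc u == 1%N)))) ->
  iso S X0 (dsum (VI K I) Y0).
Proof.
move=> /subsetP SI /subsetP IU Hna.
have SU : forall u, u \in S -> u \in U by move=> u /SI /IU.
apply: iso_of_table.
- move=> u hu; have [hw hd] := memU (SU u hu).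
  rewrite /= (dimXU (SU u hu)) (SI u hu) /dimY hw /=.
  move: hd (wr_lt HP HQ hw) (wc_lt HP HQ hw).
  by case: (wr u) => [|[|r]] //; case: (wc u) => [|[|[|c]]].
- move=> u v hu hv huv i j i' j' Ei Ej.
  rewrite (Nentry (SI u hu) (SI v hv) huv) /= mxE -Ei -Ej; congr (_%:R).
  have [hwu hdu] := memU (SU u hu); have [hwv hdv] := memU (SU v hv).
  have hi : (i < dtab (wr u) (wc u))%N by rewrite -(dimXU (SU u hu)).
  have hj : (j < dtab (wr v) (wc v))%N by rewrite -(dimXU (SU v hv)).
  case/andP: (wle HP HQ hwu huv) => h1 h2.
  apply: chk2P => //; rewrite ?wr_lt ?wc_lt //.
  case: Hna => H; [move: (H u hu) | move: (H v hv)].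
  + by apply: contra => /and4P [-> -> _ _].
  + by apply: contra => /and4P [_ _ -> ->].
Qed.

End W.


Section W6.
Local Open Scope ring_scope.
Variables (K : fieldType) (m n : nat) (s : bool).
Hypothesis HP : (2 <= PP m n s)%N.
Hypothesis HQ : (3 <= QQ m n s)%N.
Notation vtx := (vtx m n).
Notation win := (win s).
Notation wr := (wr s).
Notation wc := (wc s).
Notation U := (U m n s).
Notation I0 := (I0 m n s).

Lemma caseU (u : vtx) : u \in U ->
  (wr u = 0 /\ wc u = 1)%N \/ (wr u = 0 /\ wc u = 2)%N \/ (wr u = 1 /\ wc u = 0)%N \/
      (wr u = 1 /\ wc u = 1)%N \/ (wr u = 1 /\ wc u = 2)%N.
Proof.
case/memU => hw hd; move: hd (wr_lt HP HQ hw) (wc_lt HP HQ hw).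
case: (wr u) => [|[|r]] //; case: (wc u) => [|[|[|c]]] // _ _ _.
- by left.
- by right; left.
- by right; right; left.
- by right; right; right; left.
- by right; right; right; right.
Qed.

Lemma inU (u : vtx) r c : win u -> wr u = r -> wc u = c -> dtab r c != 0%N -> u \in U.
Proof. by move=> hw hr hc hd; rewrite inE hw hr hc hd. Qed.

Lemma inI0 (u : vtx) : u \in U -> ~~ ((wr u == 0%N) && (wc u == 1%N)) -> u \in I0.
Proof. by move=> hu hn; rewrite inE hu hn. Qed.

Lemma I0U : I0 \subset U.
Proof. by apply/subsetP => u; rewrite inE => /andP []. Qed.

Lemma U_up (u v : vtx) : u \in U -> gle u v -> v \in U.
Proof.
move=> hu huv; have [hw hd] := memU hu; have hv := win_up HP HQ hw huv.
apply: (inU hv erefl erefl).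
have /andP [h1 h2] := wle HP HQ hw huv.
move: hd h1 h2 (wr_lt HP HQ hv) (wc_lt HP HQ hv).
case: (wr u) => [|[|r]] //; case: (wc u) => [|[|[|c]]] //;
  case: (wr v) => [|[|r']] //; case: (wc v) => [|[|[|c']]] //.
Qed.

Lemma arrowP (u v : vtx) r c r' c' : win u -> win v -> wr u = r -> wc u = c -> wr v = r' -> wc v = c' ->
  arrow u v = ((r == r') && (c.+1 == c')) || ((c == c') && (r.+1 == r')).
Proof. by move=> hu hv hr hc hr' hc'; rewrite (arrow_win HP HQ hu hv) hr hc hr' hc'. Qed.

Section Verts.
Variables (va vb vc vw vt : vtx).
Hypotheses (wva : win va) (rva : wr va = 0%N) (cva : wc va = 1%N).
Hypotheses (wvb : win vb) (rvb : wr vb = 0%N) (cvb : wc vb = 2%N).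
Hypotheses (wvc : win vc) (rvc : wr vc = 1%N) (cvc : wc vc = 0%N).
Hypotheses (wvw : win vw) (rvw : wr vw = 1%N) (cvw : wc vw = 1%N).
Hypotheses (wvt : win vt) (rvt : wr vt = 1%N) (cvt : wc vt = 2%N).

Lemma Ua : va \in U. Proof. exact: (inU wva rva cva). Qed.
Lemma Ub : vb \in U. Proof. exact: (inU wvb rvb cvb). Qed.
Lemma Uc : vc \in U. Proof. exact: (inU wvc rvc cvc). Qed.
Lemma Uw : vw \in U. Proof. exact: (inU wvw rvw cvw). Qed.
Lemma Ut : vt \in U. Proof. exact: (inU wvt rvt cvt). Qed.
Lemma Ib : vb \in I0. Proof. by apply: inI0; rewrite ?Ub ?rvb ?cvb. Qed.
Lemma Ic : vc \in I0. Proof. by apply: inI0; rewrite ?Uc ?rvc ?cvc. Qed.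
Lemma Iw : vw \in I0. Proof. by apply: inI0; rewrite ?Uw ?rvw ?cvw. Qed.
Lemma It : vt \in I0. Proof. by apply: inI0; rewrite ?Ut ?rvt ?cvt. Qed.

Lemma Aab : arrow va vb. Proof. by rewrite (arrowP wva wvb rva cva rvb cvb). Qed.
Lemma Abt : arrow vb vt. Proof. by rewrite (arrowP wvb wvt rvb cvb rvt cvt). Qed.
Lemma Acw : arrow vc vw. Proof. by rewrite (arrowP wvc wvw rvc cvc rvw cvw). Qed.
Lemma Awt : arrow vw vt. Proof. by rewrite (arrowP wvw wvt rvw cvw rvt cvt). Qed.

Lemma posU u : u \in U -> u = va \/ u = vb \/ u = vc \/ u = vw \/ u = vt.
Proof.
move=> hu; have [hw _] := memU hu.
case: (caseU hu) => [[h1 h2]|[[h1 h2]|[[h1 h2]|[[h1 h2]|[h1 h2]]]]].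
- by left; apply: (win_inj HP HQ) => //; rewrite ?h1 ?h2 ?rva ?cva.
- by right; left; apply: (win_inj HP HQ) => //; rewrite ?h1 ?h2 ?rvb ?cvb.
- by right; right; left; apply: (win_inj HP HQ) => //; rewrite ?h1 ?h2 ?rvc ?cvc.
- by right; right; right; left; apply: (win_inj HP HQ) => //; rewrite ?h1 ?h2 ?rvw ?cvw.
- by right; right; right; right; apply: (win_inj HP HQ) => //; rewrite ?h1 ?h2 ?rvt ?cvt.
Qed.

Lemma t_sink (I : {set vtx}) : vt \in I -> I \subset U -> vt \in sinks I.
Proof.
move=> ht /subsetP IU; rewrite inE ht /=; apply/existsP => -[y /andP [hy ha]].
have [hwy _] := memU (IU y hy).
move: ha; rewrite (arrowP wvt hwy rvt cvt erefl erefl).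
have := wr_lt HP HQ hwy; have := wc_lt HP HQ hwy.
by case: (wr y) => [|[|r]] //; case: (wc y) => [|[|[|c]]].
Qed.

Lemma is_interval_U : is_interval U.
Proof.
set R := fun a b : vtx => [&& a \in U, b \in U & arrow a b || arrow b a].
have Rsym : symmetric R by move=> a b; rewrite /R andbCA orbC.
have toT : forall x, x \in U -> connect R x vt.
  move=> x hx; case: (posU hx) => [->|[->|[->|[->|->]]]].
  - apply: connect_trans (connect1 (_ : R va vb)) (connect1 (_ : R vb vt));
      by rewrite /R ?Ua ?Ub ?Ut ?Aab ?Abt.
  - by apply: connect1; rewrite /R Ub Ut Abt.
  - apply: connect_trans (connect1 (_ : R vc vw)) (connect1 (_ : R vw vt));
      by rewrite /R ?Uc ?Uw ?Ut ?Acw ?Awt.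
  - by apply: connect1; rewrite /R Uw Ut Awt.
  - exact: connect0.
apply/and3P; split.
- by apply/set0Pn; exists vt; exact: Ut.
- apply/forall_inP => x hx; apply/forall_inP => y hy.
  apply: connect_trans (toT x hx) _.
  by rewrite (sym_connect_sym Rsym); apply: toT.
- apply/forall_inP => x hx; apply/forall_inP => y hy; apply/forallP => z.
  by apply/implyP => /andP [hxz _]; apply: U_up hx hxz.
Qed.

Lemma is_interval_I0 : is_interval I0.
Proof.
set R := fun a b : vtx => [&& a \in I0, b \in I0 & arrow a b || arrow b a].
have Rsym : symmetric R by move=> a b; rewrite /R andbCA orbC.
have toT : forall x, x \in I0 -> connect R x vt.
  move=> x hx; have hxU : x \in U by move: hx; rewrite inE => /andP [].
  case: (posU hxU) => [hxe|[hxe|[hxe|[hxe|hxe]]]]; subst x.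
  - by move: hx; rewrite inE rva cva /= andbF.
  - by apply: connect1; rewrite /R Ib It Abt.
  - apply: connect_trans (connect1 (_ : R vc vw)) (connect1 (_ : R vw vt));
      by rewrite /R ?Ic ?Iw ?It ?Acw ?Awt.
  - by apply: connect1; rewrite /R Iw It Awt.
  - exact: connect0.
apply/and3P; split.
- by apply/set0Pn; exists vt; exact: It.
- apply/forall_inP => x hx; apply/forall_inP => y hy.
  apply: connect_trans (toT x hx) _.
  by rewrite (sym_connect_sym Rsym); apply: toT.
- apply/forall_inP => x hx; apply/forall_inP => y hy; apply/forallP => z.
  apply/implyP => /andP [hxz hzy].
  have hxU : x \in U by move: hx; rewrite inE => /andP [].
  have hzU := U_up hxU hxz.
  apply: inI0 => //; apply/negP => /andP [/eqP hr /eqP hc].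
  have [hwx _] := memU hxU; have [hwz _] := memU hzU.
  have /andP [h1 h2] := wle HP HQ hwx hxz; rewrite hr hc in h1 h2.
  move: hx; rewrite inE hxU /=; have [_ hdx] := memU hxU.
  by move: h1 h2 hdx; case: (wr x) => [|[|r]] //; case: (wc x) => [|[|[|c]]].
Qed.

Lemma J_I0 (J : {set vtx}) : I0 \subset J -> J \subset U -> J != I0 -> J = U.
Proof.
move=> sIJ /subsetP JU hne; have I0J := subsetP sIJ.
have : ~~ (J \subset I0) by apply: contra hne => sJ; rewrite eqEsubset sJ sIJ.
case/subsetPn => x hxJ hxI.
have hxa : x = va.
  have hxU := JU x hxJ; case: (posU hxU) => [//|[hx|[hx|[hx|hx]]]]; subst x;
    by rewrite ?Ib ?Ic ?Iw ?It in hxI.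
apply/setP => u; apply/idP/idP; first exact: JU.
move=> hu; case: (posU hu) => [->|[->|[->|[->|->]]]]; rewrite -?hxa //; apply: I0J.
- exact: Ib.
- exact: Ic.
- exact: Iw.
- exact: It.
Qed.

Lemma ssU_no_w u : u \in ss_vert U -> ~~ ((wr u == 1%N) && (wc u == 1%N)).
Proof.
rewrite /ss_vert inE => hu.
have huU : u \in U by case/orP: hu; rewrite inE => /andP [].
apply/negP => /andP [/eqP hr /eqP hc].
have hw : u = vw by apply: (win_inj HP HQ); rewrite ?rvw ?cvw //; case: (memU huU).
subst u; case/orP: hu; rewrite inE => /andP [_] /existsP; apply.
- by exists vc; rewrite Uc Acw.
- by exists vt; rewrite Ut Awt.
Qed.

Lemma a_src : va \in sources U.
Proof.
rewrite inE Ua /=; apply/existsP => -[y /andP [hy ha]].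
have [hwy hdy] := memU hy.
move: ha; rewrite (arrowP hwy wva erefl erefl rva cva).
move: hdy (wr_lt HP HQ hwy) (wc_lt HP HQ hwy).
by case: (wr y) => [|[|r]] //; case: (wc y) => [|[|[|c]]].
Qed.

Lemma c_src : vc \in sources U.
Proof.
rewrite inE Uc /=; apply/existsP => -[y /andP [hy ha]].
have [hwy hdy] := memU hy.
move: ha; rewrite (arrowP hwy wvc erefl erefl rvc cvc).
move: hdy (wr_lt HP HQ hwy) (wc_lt HP HQ hwy).
by case: (wr y) => [|[|r]] //; case: (wc y) => [|[|[|c]]].
Qed.

Lemma ccU : U \subset cc_vert U.
Proof.
have ssa : va \in ss_vert U by rewrite /ss_vert inE a_src.
have ssc : vc \in ss_vert U by rewrite /ss_vert inE c_src.
have sst : vt \in ss_vert U by rewrite /ss_vert inE t_sink ?orbT ?Ut.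
apply/subsetP => x hx; rewrite /cc_vert inE hx /=.
have hP : forall y z : vtx, win y -> win z -> (pc s y == pc s z) = (wr y == wr z).
  by move=> y z hy hz; rewrite (pcE HP HQ hy) (pcE HP HQ hz) eqn_add2l.
have hQ : forall y z : vtx, win y -> win z -> (qc s y == qc s z) = (wc y == wc z).
  by move=> y z hy hz; rewrite (qcE HP HQ hy) (qcE HP HQ hz) eqn_add2l.
have E : [exists a in ss_vert U, pc s a == pc s x] && [exists b in ss_vert U, qc s b == qc s x].
  apply/andP; split.
  - case: (posU hx) => [->|[->|[->|[->|->]]]].
    + by apply/exists_inP; exists va; rewrite // eqxx.
    + by apply/exists_inP; exists va; rewrite // hP // rva rvb.
    + by apply/exists_inP; exists vc; rewrite // eqxx.
    + by apply/exists_inP; exists vc; rewrite // hP // rvc rvw.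
    + by apply/exists_inP; exists vt; rewrite // eqxx.
  - case: (posU hx) => [->|[->|[->|[->|->]]]].
    + by apply/exists_inP; exists va; rewrite // eqxx.
    + by apply/exists_inP; exists vt; rewrite // hQ // cvt cvb.
    + by apply/exists_inP; exists vc; rewrite // eqxx.
    + by apply/exists_inP; exists va; rewrite // hQ // cva cvw.
    + by apply/exists_inP; exists vt; rewrite // eqxx.
move: E; rewrite /pc /qc; case: s => //.
by rewrite andbC.
Qed.

End Verts.
End W6.


Section G7.
Local Open Scope ring_scope.
Variables (K : fieldType) (m n : nat).
Notation vtx := (vtx m n).
Notation rep := (rep K m n).

Lemma dbar_zero k (M : rep) J z : is_rep setT M -> z \in ess k J -> z \in J ->
  rdim M z = 0%N -> dbar k M J = 0%N.
Proof.
move=> HM hz hzJ h0; have HS : is_rep (ess k J) M := is_rep_sub (subsetT _) HM.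
have B : forall k', summand_pow (ess k J) M (VI K J) k' -> (k' <= 0)%N.
  by move=> k' /summand_bound /(_ hz hzJ); rewrite h0.
have [Hs _] := mult_spec HS B.
by apply/eqP; rewrite -leqn0; exact: B _ Hs.
Qed.

Lemma dbar_ge k (M : rep) J u l : is_rep setT M -> u \in ess k J -> u \in J ->
  summand_pow (ess k J) M (VI K J) l -> (l <= dbar k M J)%N.
Proof.
move=> HM hz hzJ Hl; have HS : is_rep (ess k J) M := is_rep_sub (subsetT _) HM.
have B : forall k', summand_pow (ess k J) M (VI K J) k' -> (k' <= rdim M u)%N.
  by move=> k' /summand_bound /(_ hz hzJ).
have [_ Hmax] := mult_spec HS B.
exact: Hmax.
Qed.

Lemma dbar_zeroQ k (M : rep) J u : is_rep setT M -> Qp (ess k J) M J ->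
  u \in ess k J -> u \in J -> dbar k M J = 0%N.
Proof.
move=> HM HQ hz hzJ; have HS : is_rep (ess k J) M := is_rep_sub (subsetT _) HM.
have B : forall k', summand_pow (ess k J) M (VI K J) k' -> (k' <= rdim M u)%N.
  by move=> k' /summand_bound /(_ hz hzJ).
have [Hs _] := mult_spec HS B.
rewrite /dbar; move: Hs; case: (mult _ _ _) => [//|k'] [Y [_ Hiso]].
exfalso; apply: (Qp_retract HQ _ hz hzJ).
apply: retract_iso Hiso _; apply: retract_dsum_left; exact: retract_dsumL.
Qed.

Lemma dbar_iso k (X M : rep) I : iso setT X M -> dbar k X I = dbar k M I.
Proof.
move=> H; rewrite /dbar /mult.
have E : (fun k0 => is_mult (ess k I) X (VI K I) k0) = (fun k0 => is_mult (ess k I) M (VI K I) k0).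
  apply: functional_extensionality => k0; apply: propositional_extensionality.
  have HS := iso_sub (subsetT (ess k I)) H.
  rewrite /is_mult /summand_pow; split.
  - case=> [[Y [HY HXY]] Hm]; split.
    + by exists Y; split=> //; apply: iso_trans (iso_sym HS) HXY.
    + move=> k' [Y' [HY' H']]; apply: Hm; exists Y'; split=> //; exact: iso_trans HS H'.
  - case=> [[Y [HY HXY]] Hm]; split.
    + by exists Y; split=> //; apply: iso_trans HS HXY.
    + move=> k' [Y' [HY' H']]; apply: Hm; exists Y'; split=> //; exact: iso_trans (iso_sym HS) H'.
by rewrite E.
Qed.

Lemma mu_refl f (I : {set vtx}) : mu_aux f I I = 1.
Proof. by case: f => [|f] /=; rewrite eqxx. Qed.

Lemma dtilde_single k (M : rep) I : is_interval I ->
  (forall J, is_interval J -> I \subset J -> J != I -> dbar k M J = 0%N) ->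
  dtilde k M I = (dbar k M I)%:Z.
Proof.
move=> HI H; rewrite /dtilde (bigD1 I) /=; last by rewrite HI subxx.
rewrite /mobius mu_refl mul1r big1 ?addr0 // => J /andP [/andP [HJ sIJ] hne].
by rewrite H // mulr0.
Qed.

Lemma l1_ge k (M : rep) I : is_interval I -> (`|dtilde k M I| <= l1norm_dtilde k M)%N.
Proof. by move=> HI; rewrite /l1norm_dtilde (bigD1 I) //= leq_addr. Qed.

Lemma l1_iso k (X M : rep) : iso setT X M -> l1norm_dtilde k X = l1norm_dtilde k M.
Proof.
move=> H; rewrite /l1norm_dtilde; apply: eq_bigr => I _; congr (absz _).
by rewrite /dtilde; apply: eq_bigr => J _; rewrite (dbar_iso _ _ H).
Qed.

End G7.


Section M8.
Local Open Scope ring_scope.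
Variables (K : fieldType) (m n : nat) (s : bool).
Hypothesis HP : (2 <= PP m n s)%N.
Hypothesis HQ : (3 <= QQ m n s)%N.
Notation vtx := (vtx m n).
Notation rep := (rep K m n).
Notation win := (win s).
Notation wr := (wr s).
Notation wc := (wc s).
Notation U := (U m n s).
Notation I0 := (I0 m n s).
Notation X0 := (X0 K m n s).
Notation Y0 := (Y0 K m n s).

Lemma main_bound k l : (l <= l1norm_dtilde k (dpow X0 l))%N.
Proof.
set M := dpow X0 l.
have HM : is_rep setT M := is_rep_dpow l (is_rep_X0 K HP HQ setT).
have QM : forall (S : {set vtx}) J, (forall u, win u -> dtab (wr u) (wc u) != 0%N -> u \in S) ->
    Qp S M J.
  by move=> S J HS; apply: Qp_dpow; exact: Qp_X0.
have [va [wva rva cva]] := exv HP HQ (isT : (0 < 2)%N) (isT : (1 < 3)%N).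
have [vb [wvb rvb cvb]] := exv HP HQ (isT : (0 < 2)%N) (isT : (2 < 3)%N).
have [vc [wvc rvc cvc]] := exv HP HQ (isT : (1 < 2)%N) (isT : (0 < 3)%N).
have [vw [wvw rvw cvw]] := exv HP HQ (isT : (1 < 2)%N) (isT : (1 < 3)%N).
have [vt [wvt rvt cvt]] := exv HP HQ (isT : (1 < 2)%N) (isT : (2 < 3)%N).
have outU : forall k' (J : {set vtx}), ~~ (J \subset U) -> dbar k' M J = 0%N.
  move=> k' J /subsetPn [x hxJ hxU].
  have [z hz hzx] := min_source hxJ.
  have hzJ : z \in J by move: hz; rewrite inE => /andP [].
  apply: (dbar_zero HM (src_ess k' hz) hzJ).
  rewrite /M rdim_dpow /=.
  suff -> : dimX s z = 0%N by rewrite muln0.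
  rewrite /dimX; case hw: (win z) => //; apply/eqP; apply: contraR hxU => hd.
  by apply: (U_up HP HQ _ hzx); rewrite inE hw hd.
have sumpow : forall (S I : {set vtx}), S \subset I -> I \subset U ->
    ((forall u, u \in S -> ~~ ((wr u == 0%N) && (wc u == 1%N))) \/
     (forall u, u \in S -> ~~ ((wr u == 1%N) && (wc u == 1%N)))) ->
    summand_pow S M (VI K I) l.
  move=> S I h1 h2 h3; exists (dpow Y0 l); split.
  - exact: is_rep_dpow (is_rep_Y0 K HP HQ S).
  - exact: iso_dpow_split (iso_X0N K HP HQ h1 h2 h3).
have HU := is_interval_U HP HQ wva rva cva wvb rvb cvb wvc rvc cvc wvw rvw cvw wvt rvt cvt.
have HI0 := is_interval_I0 HP HQ wva rva cva wvb rvb cvb wvc rvc cvc wvw rvw cvw wvt rvt cvt.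
have hUt := Ut wvt rvt cvt.
have hIt := It wvt rvt cvt.
case: k.
-
  apply: leq_trans (l1_ge _ _ HU).
  rewrite (dtilde_single HU); last first.
    move=> J HJ sUJ hne; apply: outU; apply: contra hne => sJU.
    by rewrite eqEsubset sJU sUJ.
  rewrite absz_nat.
  have ht : vt \in ess SS U by apply: snk_ess; apply: (t_sink HP HQ wvt rvt cvt hUt (subxx _)).
  apply: (dbar_ge HM ht hUt); apply: sumpow.
  + exact: ess_sub.
  + exact: subxx.
  + right => u hu; exact: (ssU_no_w HP HQ wvc rvc cvc wvw rvw cvw wvt rvt cvt hu).
-
  apply: leq_trans (l1_ge _ _ HI0).
  rewrite (dtilde_single HI0); last first.
    move=> J HJ sIJ hne; case sJU: (J \subset U); last by apply: outU; rewrite sJU.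
    rewrite (J_I0 HP HQ wva rva cva wvb rvb cvb wvc rvc cvc wvw rvw cvw wvt rvt cvt sIJ sJU hne).
    have ht : vt \in ess CC U by apply: snk_ess; apply: (t_sink HP HQ wvt rvt cvt hUt (subxx _)).
    apply: (dbar_zeroQ HM _ ht hUt); apply: QM => u hw hd.
    have := ccU HP HQ wva rva cva wvb rvb cvb wvc rvc cvc wvw rvw cvw wvt rvt cvt.
    by move/subsetP; apply; rewrite inE hw hd.
  rewrite absz_nat.
  have ht : vt \in ess CC I0 by apply: snk_ess; apply: (t_sink HP HQ wvt rvt cvt hIt (I0U _ _ _)).
  apply: (dbar_ge HM ht hIt); apply: sumpow.
  + exact: ess_sub.
  + exact: I0U.
  + left => u hu; have := subsetP (ess_sub CC I0) u hu.
    by rewrite inE => /andP [].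
-
  apply: leq_trans (l1_ge _ _ HI0).
  rewrite (dtilde_single HI0); last first.
    move=> J HJ sIJ hne; case sJU: (J \subset U); last by apply: outU; rewrite sJU.
    rewrite (J_I0 HP HQ wva rva cva wvb rvb cvb wvc rvc cvc wvw rvw cvw wvt rvt cvt sIJ sJU hne).
    apply: (dbar_zeroQ (k := TOT) HM _ (hUt : vt \in ess TOT U) hUt); apply: QM => u hw hd.
    by rewrite /= inE hw hd.
  rewrite absz_nat.
  apply: (dbar_ge (k := TOT) HM (hIt : vt \in ess TOT I0) hIt); apply: sumpow.
  + exact: subxx.
  + exact: I0U.
  + by left => u; rewrite inE => /andP [].
Qed.

Lemma main_s k l : exists M : rep, is_rep setT M /\
    (exists M' X : rep, [/\ is_rep setT M', is_rep setT X,
        iso setT M (dsum M' X), interval_decomposable M' & no_interval_summand X]) /\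
    (forall M' X : rep, is_rep setT M' -> is_rep setT X ->
        iso setT M (dsum M' X) -> interval_decomposable M' -> no_interval_summand X ->
        (l <= l1norm_dtilde k X)%N).
Proof.
set M := dpow X0 l.
have HM : is_rep setT M := is_rep_dpow l (is_rep_X0 K HP HQ setT).
have QM : forall J, Qp setT M J.
  by move=> J; apply: Qp_dpow; apply: Qp_X0 => // u _ _; rewrite in_setT.
have nis : no_interval_summand M.
  move=> I HI [Y [HY Hi]]; case/and3P: HI => /set0Pn [u hu] _ _.
  apply: (Qp_retract (QM I) _ (in_setT u) hu).
  exact: retract_iso Hi (retract_dsumL _ _ _).
exists M; split=> //; split.
- exists (zero_rep K m n), M; split=> //.
  + exact: is_rep_zero.
  + exact: iso_zero_l.
  + by exists [::]; split=> //; exact: iso_refl.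
- move=> M' X HM' HX Hiso [s0 [Hs0 Hiso']] HXn.
  have E : iso setT M' (zero_rep K m n).
    case: s0 Hs0 Hiso' => [|J s'] Hs0 Hiso' //=.
    exfalso; have HJ := Hs0 J (mem_head _ _).
    case/and3P: HJ => /set0Pn [u hu] _ _.
    apply: (Qp_retract (QM J) _ (in_setT u) hu).
    apply: retract_iso Hiso _; apply: retract_dsum_left.
    exact: retract_iso Hiso' (retract_dsumL _ _ _).
  have HXM : iso setT X M.
    apply: iso_sym; apply: iso_trans Hiso _.
    apply: iso_trans (iso_dsum E (iso_refl _ X)) _.
    exact: iso_sym (iso_zero_l _ X).
  rewrite (l1_iso k HXM); exact: main_bound.
Qed.

End M8.


Theorem mainTheorem18 (K : fieldType) (m n : nat) (k : ess_kind) (l : nat) :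
  ((2 <= m) && (5 <= n) \/ (5 <= m) && (2 <= n))%N ->
  exists M : rep K m n, is_rep setT M /\
    (exists M' X : rep K m n, [/\ is_rep setT M', is_rep setT X,
        iso setT M (dsum M' X), interval_decomposable M' & no_interval_summand X]) /\
    (forall M' X : rep K m n, is_rep setT M' -> is_rep setT X ->
        iso setT M (dsum M' X) -> interval_decomposable M' -> no_interval_summand X ->
        (l <= l1norm_dtilde k X)%N).
Proof.
case=> /andP [h1 h2].
- have hP : (2 <= PP m n false)%N by rewrite /PP.
  have hQ : (3 <= QQ m n false)%N by rewrite /QQ; apply: leq_trans h2.
  exact: (@main_s K m n false hP hQ k l).
- have hP : (2 <= PP m n true)%N by rewrite /PP.
  have hQ : (3 <= QQ m n true)%N by rewrite /QQ; apply: leq_trans h1.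
  exact: (@main_s K m n true hP hQ k l).
Qed.
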